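(* If $(X_1,X_2)$ is an extensible pair, then $\gcd(\Delta_1\Delta_2,\det Z_k)=1$ for all $k\ge1$.
   Context: A marked Dynkin diagram $(X,\xi)$ is the Dynkin diagram of a symmetrizable generalized Cartan matrix $C(X)$ with a distinguished node $\xi$; $\det X:=\det C(X)$; $X(-1)$ is $X$ with $\xi$ and its incident edges deleted ($\det$ of the empty diagram is $1$); $\Delta_X=\det X-\det X(-1)$, and $\Delta_i:=\Delta_{X_i}$. A pair $(X_1,\xi_1),(X_2,\xi_2)$ of marked Dynkin diagrams is an extensible pair if $\det X_i\neq0$, $\Delta_i\ne0$, $\gcd(\det X_i,\Delta_i)=1$ for $i=1,2$, and $\gcd(\Delta_1,\Delta_2)=1$. $Z_k=Z_k(X_1,X_2)$ is obtained from the disjoint union of $X_1$, a path $A_k$ with nodes $1,\dots,k$ and $X_2$ by adding simple edges $\xi_1$—$1$ and $k$—$\xi_2$; $\det Z_k$ is the determinant of its Cartan matrix. *)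

(* Defs.v *)
From HB Require Import structures.
From mathcomp Require Import all_boot all_order all_algebra.
Set Implicit Arguments. Unset Strict Implicit. Unset Printing Implicit Defensive.
Import Order.TTheory GRing.Theory Num.Theory.
Local Open Scope ring_scope.

Definition is_gcm (n : nat) (C : 'M[int]_n) : Prop :=
  (forall i, C i i = 2) /\
  (forall i j, i != j -> C i j <= 0) /\
  (forall i j, C i j = 0 -> C j i = 0).

(* Symmetrizable: D C symmetric for some positive diagonal D
   (positive rational entries can be scaled to positive integers). *)
Definition symmetrizable (n : nat) (C : 'M[int]_n) : Prop :=
  exists d : 'I_n -> int, (forall i, 0 < d i) /\
    (forall i j, d i * C i j = d j * C j i).

(* A marked Dynkin diagram (X, xi) is given by its Cartan matrix C and xi. *)
Definition marked_sgcm (n : nat) (C : 'M[int]_n) (xi : 'I_n) : Prop :=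
  is_gcm C /\ symmetrizable C.

(* det X(-1): delete row and column xi (empty matrix has det 1). *)
Definition detm1 (n : nat) (C : 'M[int]_n) (xi : 'I_n) : int :=
  \det (row' xi (col' xi C)).

Definition Delta (n : nat) (C : 'M[int]_n) (xi : 'I_n) : int :=
  \det C - detm1 C xi.

Definition extensible_pair (n1 : nat) (C1 : 'M[int]_n1) (xi1 : 'I_n1)
    (n2 : nat) (C2 : 'M[int]_n2) (xi2 : 'I_n2) : Prop :=
  [/\ \det C1 != 0, Delta C1 xi1 != 0 & gcdz (\det C1) (Delta C1 xi1) = 1] /\
  [/\ \det C2 != 0, Delta C2 xi2 != 0 & gcdz (\det C2) (Delta C2 xi2) = 1] /\
  gcdz (Delta C1 xi1) (Delta C2 xi2) = 1.

(* Nodes of Z_k: X_1, then the path A_k (nodes 0..k-1 here, i.e. 1..k), then X_2. *)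
Definition Znode (n1 k n2 : nat) (i : 'I_(n1 + (k + n2))) : 'I_n1 + ('I_k + 'I_n2) :=
  match split i with inl a => inl a | inr b => inr (split b) end.

Definition Zentry (n1 k n2 : nat) (C1 : 'M[int]_n1) (xi1 : 'I_n1)
    (C2 : 'M[int]_n2) (xi2 : 'I_n2) (x y : 'I_n1 + ('I_k + 'I_n2)) : int :=
  match x, y with
  | inl a, inl b => C1 a b
  | inr (inr a), inr (inr b) => C2 a b
  | inr (inl a), inr (inl b) =>
      if a == b then 2
      else if ((a.+1 == b :> nat) || (b.+1 == a :> nat)) then -1 else 0
  | inl a, inr (inl b) | inr (inl b), inl a =>
      if (a == xi1) && (b == 0%N :> nat) then -1 else 0
  | inr (inl a), inr (inr b) | inr (inr b), inr (inl a) =>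
      if (a.+1 == k)%N && (b == xi2) then -1 else 0
  | _, _ => 0
  end.

Definition Zmat (n1 n2 k : nat) (C1 : 'M[int]_n1) (xi1 : 'I_n1)
    (C2 : 'M[int]_n2) (xi2 : 'I_n2) : 'M[int]_(n1 + (k + n2)) :=
  \matrix_(i, j) Zentry C1 xi1 C2 xi2 (Znode i) (Znode j).

(* Main.v *)
Require Import Defs.
From HB Require Import structures.
From mathcomp Require Import all_boot all_order all_algebra.
From mathcomp Require Import fingroup perm ring.
Set Implicit Arguments. Unset Strict Implicit. Unset Printing Implicit Defensive.
Import Order.TTheory GRing.Theory Num.Theory.
Local Open Scope ring_scope.

Section Glue.
Variable R : comRingType.

Definition gen m n (A : 'M[R]_m) (D : 'M[R]_n) (u : 'I_m) (v : 'I_n) (x y : R)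
  : 'M[R]_(m + n) :=
 \matrix_(i, j) match split i, split j with
   | inl a, inl b => A a b
   | inl a, inr b => if (a == u) && (b == v) then x else 0
   | inr b, inl a => if (b == v) && (a == u) then y else 0
   | inr a, inr b => D a b end.

Definition zr n (A : 'M[R]_n) (u : 'I_n) : 'M[R]_n :=
  \matrix_(a, b) if a == u then 0 else A a b.
Definition zc n (A : 'M[R]_n) (u : 'I_n) : 'M[R]_n :=
  \matrix_(a, b) if b == u then 0 else A a b.

Lemma splitL m n (a : 'I_m) : split (lshift n a) = inl a.
Proof. exact: (unsplitK (inl a)). Qed.
Lemma splitR m n (b : 'I_n) : split (rshift m b) = inr b.
Proof. exact: (unsplitK (inr b)). Qed.

Lemma det_row0 n (B : 'M[R]_n) i : (forall j, B i j = 0) -> \det B = 0.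
Proof. by move=> H; rewrite (expand_det_row _ i) big1 // => j _; rewrite H mul0r. Qed.

Lemma det_zr n (A : 'M[R]_n) u : \det (zr A u) = 0.
Proof. by apply: (det_row0 (i := u)) => j; rewrite mxE eqxx. Qed.

Lemma gen_tr m n (A : 'M[R]_m) (D : 'M[R]_n) u v x y :
  (gen A D u v x y)^T = gen A^T D^T u v y x.
Proof.
apply/matrixP => i j; rewrite !mxE.
by case: (split i) => a; case: (split j) => b //=; rewrite ?mxE // andbC.
Qed.

Lemma neq_lift' n (i0 : 'I_n) i : (lift i0 i == i0) = false.
Proof. by apply/negbTE; rewrite eq_sym neq_lift. Qed.

Section S.
Variables (m n : nat) (A : 'M[R]_m) (D : 'M[R]_n) (u : 'I_m) (v : 'I_n) (x y : R).

Lemma L1 : \det (gen A D u v x y) = \det A * \det D + \det (gen (zr A u) D u v x y).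
Proof.
have -> : \det A * \det D = \det (gen A D u v 0 y).
  rewrite -(det_lblock A (\matrix_(i, j) if (i == v) && (j == u) then y else 0)).
  congr (\det _); apply/matrixP => i j.
  rewrite -(splitK i) -(splitK j).
  case: (split i) => a; case: (split j) => b /=;
    rewrite ?block_mxEul ?block_mxEur ?block_mxEdl ?block_mxEdr !mxE ?splitL ?splitR //;
    by case: ifP.
rewrite -[X in _ = X + _]mul1r -[X in _ = _ + X]mul1r.
apply: (determinant_multilinear (i0 := unsplit (inl u))).

- apply/rowP => j; rewrite !mxE unsplitK.
  case: (split j) => b; rewrite ?mxE !eqxx /= !mul1r ?addr0 //.
  by case: ifP; rewrite ?addr0 ?add0r.
- apply/matrixP => i j; rewrite !mxE.
  move: (neq_lift (unsplit (inl u)) i); move: (lift _ i) => k hk.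
  rewrite -(splitK k) in hk; case: (split k) hk => a hk //.
  have hau : a != u by apply: contra hk => /eqP ->.
  case: (split j) => b //; rewrite (negbTE hau) //.
- apply/matrixP => i j; rewrite !mxE.
  move: (neq_lift (unsplit (inl u)) i); move: (lift _ i) => k hk.
  rewrite -(splitK k) in hk; case: (split k) hk => a hk //.
  have hau : a != u by apply: contra hk => /eqP ->.
  case: (split j) => b //; rewrite ?mxE (negbTE hau) //.
Qed.

Lemma L2 : \det (gen A D u v x y) = \det A * \det D + \det (gen A (zr D v) u v x y).
Proof.
have -> : \det A * \det D = \det (gen A D u v x 0).
  rewrite -(det_ublock A (\matrix_(i, j) if (i == u) && (j == v) then x else 0)).
  congr (\det _); apply/matrixP => i j.
  rewrite -(splitK i) -(splitK j).
  case: (split i) => a; case: (split j) => b /=;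
    rewrite ?block_mxEul ?block_mxEur ?block_mxEdl ?block_mxEdr !mxE ?splitL ?splitR //;
    by case: ifP.
rewrite -[X in _ = X + _]mul1r -[X in _ = _ + X]mul1r.
apply: (determinant_multilinear (i0 := unsplit (inr v))).

- apply/rowP => j; rewrite !mxE unsplitK.
  case: (split j) => b; rewrite ?mxE !eqxx /= !mul1r ?addr0 //.
  by case: ifP; rewrite ?addr0 ?add0r.
- apply/matrixP => i j; rewrite !mxE.
  move: (neq_lift (unsplit (inr v)) i); move: (lift _ i) => k hk.
  rewrite -(splitK k) in hk; case: (split k) hk => a hk //.
  have hau : a != v by apply: contra hk => /eqP ->.
  case: (split j) => b //; rewrite (negbTE hau) //.
- apply/matrixP => i j; rewrite !mxE.
  move: (neq_lift (unsplit (inr v)) i); move: (lift _ i) => k hk.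
  rewrite -(splitK k) in hk; case: (split k) hk => a hk //.
  have hau : a != v by apply: contra hk => /eqP ->.
  case: (split j) => b //; rewrite ?mxE (negbTE hau) //.
Qed.


End S.

Lemma L1c m n (A : 'M[R]_m) (D : 'M[R]_n) u v x y : \det (gen A D u v x y) = \det A * \det D + \det (gen (zc A u) D u v x y).
Proof.
rewrite -[LHS]det_tr gen_tr (L1 A^T) !det_tr -[\det (gen (zc A u) _ _ _ _ _)]det_tr gen_tr.
congr (_ + \det (gen _ _ _ _ _ _)); apply/matrixP => i j; rewrite !mxE //.
Qed.

Lemma L2c m n (A : 'M[R]_m) (D : 'M[R]_n) u v x y : \det (gen A D u v x y) = \det A * \det D + \det (gen A (zc D v) u v x y).
Proof.
rewrite -[LHS]det_tr gen_tr (L2 A^T) !det_tr -[\det (gen A (zc D v) _ _ _ _)]det_tr gen_tr.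
congr (_ + \det (gen _ _ _ _ _ _)); apply/matrixP => i j; rewrite !mxE //.
Qed.


Definition cz n (A : 'M[R]_n) (u : 'I_n) (x : R) : 'M[R]_n :=
  \matrix_(a, b) if (a == u) && (b == u) then x else
     if (a == u) || (b == u) then 0 else A a b.

Lemma det_cz n (A : 'M[R]_n) u x : \det (cz A u x) = x * \det (row' u (col' u A)).
Proof.
rewrite (expand_det_row _ u) (bigD1 u) //= big1 ?addr0.
  rewrite mxE !eqxx /= /cofactor -signr_odd addnn odd_double expr0 mul1r.
  congr (_ * \det _); apply/matrixP => i j; rewrite !mxE !neq_lift' //.
move=> j hj; rewrite mxE eqxx (negbTE hj) /= mul0r //.
Qed.

Lemma genE m n (A : 'M[R]_m) (D : 'M[R]_n) u v x y p q :
  gen A D u v x y (unsplit p) (unsplit q) =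
  match p, q with
   | inl a, inl b => A a b
   | inl a, inr b => if (a == u) && (b == v) then x else 0
   | inr b, inl a => if (b == v) && (a == u) then y else 0
   | inr a, inr b => D a b end.
Proof. by rewrite mxE !unsplitK. Qed.

Lemma unsplit_eq m n (p q : 'I_m + 'I_n) : (unsplit p == unsplit q) = (p == q).
Proof. exact: (can_eq unsplitK). Qed.

Lemma tpermU m n (p0 q0 r : 'I_m + 'I_n) :
  tperm (unsplit p0) (unsplit q0) (unsplit r) =
  unsplit (if r == p0 then q0 else if r == q0 then p0 else r).
Proof.
case: tpermP => [/(can_inj unsplitK) ->|/(can_inj unsplitK) ->|]; rewrite ?eqxx //.
  by case: eqP => // ->.
by move=> h1 h2; case: eqP => [e|_]; [case: h1; rewrite e | case: eqP => [e|_] //; case: h2; rewrite e].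
Qed.

Lemma inl_eq m n (a b : 'I_m) : (inl a == inl b :> 'I_m + 'I_n) = (a == b). Proof. by []. Qed.
Lemma inr_eq m n (a b : 'I_n) : (inr a == inr b :> 'I_m + 'I_n) = (a == b). Proof. by []. Qed.
Lemma inlr_eq m n (a : 'I_m) (b : 'I_n) : (inl a == inr b :> 'I_m + 'I_n) = false. Proof. by []. Qed.
Lemma inrl_eq m n (a : 'I_m) (b : 'I_n) : (inr b == inl a :> 'I_m + 'I_n) = false. Proof. by []. Qed.

Lemma Lsw m n (A : 'M[R]_m) (D : 'M[R]_n) u v x y :
  \det (gen (zc (zr A u) u) (zc (zr D v) v) u v x y) =
  - (x * y * \det (row' u (col' u A)) * \det (row' v (col' v D))).
Proof.
set M := gen _ _ _ _ _ _.
pose i1 : 'I_(m + n) := unsplit (inl u); pose i2 : 'I_(m + n) := unsplit (inr v).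
have hne : i1 != i2 by rewrite /i1 /i2 unsplit_eq.
have H : \det (M *m tperm_mx i1 i2) = - \det M.
  by rewrite det_mulmx det_perm odd_tperm hne expr1 mulrN1.
have E : M *m tperm_mx i1 i2 = block_mx (cz A u x) 0 0 (cz D v y).
  { rewrite -xcolE; apply/matrixP => i j; rewrite mxE.
  rewrite -(splitK i) -(splitK j).
  case: (split i) => a; case: (split j) => b.
  all: rewrite /M /i1 /i2 tpermU ?inl_eq ?inr_eq ?inlr_eq ?inrl_eq.
  all: try (case: (eqVneq b u) => [->|hb]); try (case: (eqVneq b v) => [->|hb]).
  all: rewrite ?eqxx ?(negbTE hb) /=.
  all: rewrite [LHS]mxE ?splitL ?splitR ?block_mxEul ?block_mxEur ?block_mxEdl ?block_mxEdr !mxE ?eqxx ?(negbTE hb) /= ?andbT ?andbF ?orbT ?orbF //.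
  all: try by case: ifP. }
rewrite -[\det M]opprK -H E det_ublock !det_cz.
by rewrite !mulrA (mulrAC x y).
Qed.


Lemma det_zczr n (A : 'M[R]_n) u : \det (zc (zr A u) u) = 0.
Proof. by apply: (det_row0 (i := u)) => j; rewrite !mxE eqxx; case: ifP. Qed.

Lemma Gl m n (A : 'M[R]_m) (D : 'M[R]_n) u v x y :
  \det (gen A D u v x y) = \det A * \det D -
    x * y * \det (row' u (col' u A)) * \det (row' v (col' v D)).
Proof.
rewrite L1 (L1c (zr A u)) (L2 (zc (zr A u) u)) (L2c (zc (zr A u) u) (zr D v)) Lsw.
by rewrite det_zr det_zczr !mul0r !add0r.
Qed.

End Glue.

Section W.
Variables (n2 : nat) (C2 : 'M[int]_n2) (xi2 : 'I_n2).

Definition pth (a b : nat) : int :=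
  if a == b then 2 else if ((a.+1 == b) || (b.+1 == a))%N then -1 else 0.

Definition Wn (j a b : nat) : int :=
  if (a < j)%N then (if (b < j)%N then pth a b
                     else if ((a.+1 == j) && (b - j == xi2))%N then -1 else 0)
  else if (b < j)%N then (if ((b.+1 == j) && (a - j == xi2))%N then -1 else 0)
  else C2 (insubd xi2 (a - j)%N) (insubd xi2 (b - j)%N).

Definition Wm j : 'M[int]_(j + n2) := \matrix_(i, l) Wn j i l.

Definition vjn j : nat := if j is 0 then val xi2 else 0%N.
Lemma vj_lt j : (vjn j < j + n2)%N.
Proof. by case: j => [|j] /=; rewrite ?add0n ?ltn_ord. Qed.
Definition vj j : 'I_(j + n2) := Ordinal (vj_lt j).

Lemma insubd_ord (c : 'I_n2) : insubd xi2 (val c) = c.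
Proof. by apply: val_inj; rewrite val_insubd ltn_ord. Qed.

Lemma WnS j a b : Wn j.+1 a.+1 b.+1 = Wn j a b.
Proof. by rewrite /Wn /pth !ltnS !subSS !eqSS. Qed.

Lemma Wn00 j : Wn j.+1 0 0 = 2.
Proof. by []. Qed.

Lemma Wn0S j b : Wn j.+1 0 b.+1 = if (b == vjn j)%N then -1 else 0.
Proof.
rewrite /Wn /pth /=; case: j => [|j] /=; rewrite ?subn1 //.
rewrite ltnS; case: ltnP => hb //=.
  by rewrite orbF eqSS eq_sym.
by case: eqP => // e; move: hb; rewrite e.
Qed.

Lemma WnS0 j a : Wn j.+1 a.+1 0 = if (a == vjn j)%N then -1 else 0.
Proof.
rewrite /Wn /pth /=; case: j => [|j] /=; rewrite ?subn1 ?orbF //.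
rewrite ltnS; case: ltnP => hb //=.
  by rewrite eqSS eq_sym.
by case: eqP => // e; move: hb; rewrite e.
Qed.

Lemma Wm_gen j : (Wm j.+1 : 'M_(1 + (j + n2))) = gen (\matrix_(a, b) 2 : 'M[int]_1) (Wm j) ord0 (vj j) (-1) (-1).
Proof.
apply/matrixP => i l; rewrite -(splitK i) -(splitK l).
case: (split i) => a; case: (split l) => b; rewrite !mxE !unsplitK.
all: rewrite ?(ord1 a) ?(ord1 b) /= ?add1n ?mxE ?eqxx /= ?WnS ?Wn0S ?WnS0 ?andbT //.
Qed.

Lemma Wm_minor j : row' ord0 (col' ord0 (Wm j.+1 : 'M_((j + n2).+1))) = Wm j.
Proof. by apply/matrixP => i l; rewrite !mxE !lift0 WnS. Qed.

Lemma vjS j : vj j.+1 = ord0.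
Proof. exact: val_inj. Qed.

Lemma Wm0 : (Wm 0 : 'M_n2) = C2.
Proof. by apply/matrixP => i l; rewrite !mxE /Wn /= !subn0 !insubd_ord. Qed.

Lemma vj0 : (vj 0 : 'I_n2) = xi2.
Proof. exact: val_inj. Qed.

Lemma detWS j : \det (Wm j.+1) = 2 * \det (Wm j) - \det (row' (vj j) (col' (vj j) (Wm j))).
Proof.
transitivity (\det (Wm j.+1 : 'M_(1 + (j + n2)))); first by [].
rewrite Wm_gen Gl det_mx11 mxE det_mx00.
by rewrite mulrNN !mul1r.
Qed.

Lemma detW j : \det (Wm j) = \det C2 + j%:Z * Delta C2 xi2.
Proof.
suff: \det (Wm j) = \det C2 + j%:Z * Delta C2 xi2 /\
      \det (Wm j.+1) = \det C2 + j.+1%:Z * Delta C2 xi2 by case.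
elim: j => [|j [IH1 IH2]].
  rewrite detWS vj0 !Wm0 /Delta /detm1 mul0r addr0; split => //.
  rewrite mul1r; ring.
split => //.
rewrite detWS vjS Wm_minor IH1 IH2.
rewrite -[j.+2]addn2 -[j.+1]addn1 !PoszD; ring.
Qed.

Lemma WnLL j (a b : 'I_j) : Wn j a b = pth a b.
Proof. by rewrite /Wn !ltn_ord. Qed.
Lemma WnLR j (a : 'I_j) (b : 'I_n2) : Wn j a (j + b) = if ((a.+1 == j) && (b == xi2))%N then -1 else 0.
Proof. by rewrite /Wn ltn_ord ltnNge leq_addr /= addKn. Qed.
Lemma WnRL j (a : 'I_j) (b : 'I_n2) : Wn j (j + b) a = if ((a.+1 == j) && (b == xi2))%N then -1 else 0.
Proof. by rewrite /Wn ltn_ord ltnNge leq_addr /= addKn. Qed.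
Lemma WnRR j (a b : 'I_n2) : Wn j (j + a) (j + b) = C2 a b.
Proof. by rewrite /Wn !ltnNge !leq_addr /= !addKn !insubd_ord. Qed.

End W.

Lemma Zmat_gen (n1 n2 k : nat) (C1 : 'M[int]_n1) (xi1 : 'I_n1) (C2 : 'M[int]_n2) (xi2 : 'I_n2) :
  Zmat k.+1 C1 xi1 C2 xi2 = gen C1 (Wm C2 xi2 k.+1) xi1 ord0 (-1) (-1).
Proof.
apply/matrixP => i l; rewrite -(splitK i) -(splitK l).
case: (split i) => a; case: (split l) => b; rewrite !mxE /Znode !unsplitK //.
  rewrite -(splitK b); case: (split b) => c; rewrite unsplitK //=.
  have -> : (rshift k.+1 c == ord0) = false by [].
  by rewrite andbF.
  rewrite -(splitK a); case: (split a) => c; rewrite unsplitK //=.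
  have -> : (lshift n2 c == ord0) = (c == 0%N :> nat) by [].
  by rewrite andbC.
rewrite -(splitK a) -(splitK b); case: (split a) => c; case: (split b) => d.
all: rewrite !unsplitK mxE /= ?WnLL ?WnLR ?WnRL ?WnRR //.
Qed.

Unset Implicit Arguments.
Theorem lemma3p8 (n1 : nat) (C1 : 'M[int]_n1) (xi1 : 'I_n1)
    (n2 : nat) (C2 : 'M[int]_n2) (xi2 : 'I_n2) :
  marked_sgcm C1 xi1 -> marked_sgcm C2 xi2 ->
  extensible_pair C1 xi1 C2 xi2 ->
  forall k : nat, (1 <= k)%N ->
    gcdz (Delta C1 xi1 * Delta C2 xi2) (\det (Zmat k C1 xi1 C2 xi2)) = 1.
Proof.
move=> _ _ [[hd1 hD1 g1] [[hd2 hD2 g2] g12]] [|k] // _.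
rewrite Zmat_gen Gl detW.
have -> : \det (row' ord0 (col' ord0 (Wm C2 xi2 k.+1))) = \det (Wm C2 xi2 k).
  by rewrite -(Wm_minor C2 xi2 k).
rewrite detW.
have E1 : \det C1 * (\det C2 + k.+1%:Z * Delta C2 xi2) -
    -1 * -1 * \det (row' xi1 (col' xi1 C1)) * (\det C2 + k%:Z * Delta C2 xi2) =
    (\det C2 + k%:Z * Delta C2 xi2) * Delta C1 xi1 + \det C1 * Delta C2 xi2.
  rewrite /Delta /detm1 -[k.+1]addn1 PoszD; ring.
have E2 : \det C1 * (\det C2 + k.+1%:Z * Delta C2 xi2) -
    -1 * -1 * \det (row' xi1 (col' xi1 C1)) * (\det C2 + k%:Z * Delta C2 xi2) =
    (\det C1 + k%:Z * Delta C1 xi1) * Delta C2 xi2 + Delta C1 xi1 * \det C2.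
  rewrite /Delta /detm1 -[k.+1]addn1 PoszD; ring.
apply/eqP; rewrite -/(coprimez _ _) coprimezMl; apply/andP; split.
  rewrite /coprimez E1 gcdzMDl Gauss_gcdzr ?g12 //.
  by rewrite /coprimez gcdzC g1.
rewrite /coprimez E2 gcdzMDl Gauss_gcdzr ?(gcdzC (Delta C2 xi2)) ?g2 //.
by rewrite /coprimez gcdzC g12.
Qed.
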